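(* Let $G$ be the enhanced conflict graph of any traffic pattern in a multicast switch, and fix an input $i$. The subgraph of $G$ induced by the vertices representing subflows from input $i$ does not contain co-$P_3$ as an induced subgraph, where co-$P_3$ is the graph on three vertices $A,B,C$ with the single edge $BC$.
   Context: A flow is $(i,J)$ with input $i$ and nonempty fanout set $J$ of outputs; a traffic pattern is a finite set of flows; subflows are $(i,J,j)$ with $j\in J$. Enhanced conflict graph: one vertex per subflow; distinct subflows $(i,J,j),(i',J',j')$ adjacent iff $j=j'$, or $i=i'$ and $J\ne J'$. *)

(* Defs.v *)
From mathcomp Require Import all_boot.
Set Implicit Arguments. Unset Strict Implicit. Unset Printing Implicit Defensive.

Section Switch.
Variables (In Out : finType).

(* A flow (i, J): input i, fanout set J of outputs. *)
Definition flow := (In * {set Out})%type.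

Definition traffic_pattern (P : {set flow}) : Prop :=
  forall f, f \in P -> f.2 != set0.

(* Subflow (i, J, j) with j in J. *)
Definition subflow := (In * {set Out} * Out)%type.

(* Vertex set of the enhanced conflict graph of P: the subflows of flows in P. *)
Definition is_subflow (P : {set flow}) (v : subflow) : bool :=
  ((v.1.1, v.1.2) \in P) && (v.2 \in v.1.2).

Definition ecg_adj (v w : subflow) : bool :=
  (v != w) && ((v.2 == w.2) || ((v.1.1 == w.1.1) && (v.1.2 != w.1.2))).

Definition has_induced_coP3_at (P : {set flow}) (i : In) : Prop :=
  exists a b c : subflow,
    [/\ is_subflow P a && (a.1.1 == i),
        is_subflow P b && (b.1.1 == i),
        is_subflow P c && (c.1.1 == i),
        [&& a != b, a != c & b != c] &
        [&& ~~ ecg_adj a b, ~~ ecg_adj a c & ecg_adj b c]].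

End Switch.

(* Main.v *)
Require Import Defs.
From mathcomp Require Import all_boot.

Theorem lemma2 (In Out : finType) (P : {set flow In Out}) (i : In) :
  traffic_pattern P -> ~ has_induced_coP3_at P i.
Proof.
move=> _ [[[ia Ja] ja] [[[ib Jb] jb] [[[ic Jc] jc] []]]].
rewrite /is_subflow /ecg_adj /= => /andP[_ /eqP->] /andP[_ /eqP->] /andP[_ /eqP->].
case/and3P=> nab nac nbc.
rewrite nab nac nbc eqxx /= !negb_or !negbK.
case/and3P=> /andP[_ /eqP eab] /andP[_ /eqP eac] /orP[/eqP ebc|/eqP[]].
- by move: nbc; rewrite -eab -eac ebc eqxx.
- by rewrite -eab -eac.
Qed.
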